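(* Let the setting below hold, let $\sigma,\tau>0$ satisfy $\sigma\tau\|A\|^2+\tau L\le 1$, and let $(x^{(k)},z^{(k)})$ be generated either by the Bregman primal Condat--V\~u algorithm \[x^{(k+1)}=\mathrm{prox}^{\phi_{\mathrm p}}_{\tau f}\big(x^{(k)},\tau A^Tz^{(k)}+\tau\nabla h(x^{(k)})\big),\quad z^{(k+1)}=\mathrm{prox}^{\phi_{\mathrm d}}_{\sigma g^*}\big(z^{(k)},-\sigma A(2x^{(k+1)}-x^{(k)})\big),\] in which case set $d=d_-$, $\tilde d=d_{\mathrm{pcv}}$; or by the Bregman dual Condat--V\~u algorithm \[z^{(k+1)}=\mathrm{prox}^{\phi_{\mathrm d}}_{\sigma g^*}\big(z^{(k)},-\sigma Ax^{(k)}\big),\quad x^{(k+1)}=\mathrm{prox}^{\phi_{\mathrm p}}_{\tau f}\big(x^{(k)},\tau A^T(2z^{(k+1)}-z^{(k)})+\tau\nabla h(x^{(k)})\big),\] in which case set $d=d_+$, $\tilde d=d_{\mathrm{dcv}}$; in both cases starting from $x^{(0)}\in\operatorname{int}(\operatorname{dom}\phi_{\mathrm p})\cap\operatorname{dom} h$, $z^{(0)}\in\operatorname{int}(\operatorname{dom}\phi_{\mathrm d})$. Then for every $k\ge0$, all $x\in\operatorname{dom} f\cap\operatorname{dom}\phi_{\mathrm p}$ and all $z\in\operatorname{dom} g^*\cap\operatorname{dom}\phi_{\mathrm d}$, \[\mathcal L(x^{(k+1)},z)-\mathcal L(x,z^{(k+1)})\le d(x,z;x^{(k)},z^{(k)})-d(x,z;x^{(k+1)},z^{(k+1)})-\tilde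 d(x^{(k+1)},z^{(k+1)};x^{(k)},z^{(k)}).\]
   Context: Setting: $f:\mathbb R^n\to\mathbb R\cup\{+\infty\}$, $g:\mathbb R^m\to\mathbb R\cup\{+\infty\}$, $h$ are closed convex functions, $h$ differentiable on its open convex domain, $f+h$ and $g$ proper, $A\in\mathbb R^{m\times n}$; $g^*$ is the conjugate of $g$. Lagrangian: $\mathcal L(x,z)=f(x)+h(x)+\langle z,Ax\rangle-g^*(z)$ (with value $+\infty$ if $x\notin\operatorname{dom}(f+h)$ and $-\infty$ if $x\in\operatorname{dom}(f+h)$, $z\notin\operatorname{dom}g^*$). A Bregman kernel $\phi$ is convex with $\operatorname{int}(\operatorname{dom}\phi)\neq\emptyset$, continuous on $\operatorname{dom}\phi$, continuously differentiable on $\operatorname{int}(\operatorname{dom}\phi)$; its distance is $d(x,y)=\phi(x)-\phi(y)-\langle\nabla\phi(y),x-y\rangle$ on $\operatorname{dom}\phi\times\operatorname{int}(\operatorname{dom}\phi)$, and $\mathrm{prox}^\phi_F(y,a)=\operatorname{argmin}_x\big(F(x)+\langle a,x\rangle+d(x,y)\big)$, assumed for every $a$ and $y\in\operatorname{int}(\operatorname{dom}\phi)$ to be a unique point of $\operatorname{int}(\operatorname{dom}\phi)$. Kernels $\phi_{\mathrm p}$ on $\mathbb R^n$ and $\phi_{\mathrm d}$ on $\mathbb R^m$ have distances $d_{\mathrm p},d_{\mathrm d}$ with $d_{\mathrm p}(x,x')\ge\frac12\|x-x'\|_{\mathrm p}^2$, $d_{\mathrm d}(z,z')\ge\frac12\|z-z'\|_{\mathrm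 d}^2$ for norms $\|\cdot\|_{\mathrm p},\|\cdot\|_{\mathrm d}$. Also $\operatorname{dom}\phi_{\mathrm p}\subseteq\operatorname{dom}h$ and $h(x)-h(x')-\langle\nabla h(x'),x-x'\rangle\le L\,d_{\mathrm p}(x,x')$ for all $(x,x')\in\operatorname{dom}d_{\mathrm p}$, for some $L>0$. $\|A\|=\sup_{u\ne0,v\ne0}\langle v,Au\rangle/(\|v\|_{\mathrm d}\|u\|_{\mathrm p})$. The optimality conditions $0\in\partial f(x)+\nabla h(x)+A^Tz$, $0\in\partial g^*(z)-Ax$ have a solution $(x^\star,z^\star)\in\operatorname{dom}\phi_{\mathrm p}\times\operatorname{dom}\phi_{\mathrm d}$. Distances: $d_\pm(x,z;x',z')=\frac1\tau d_{\mathrm p}(x,x')+\frac1\sigma d_{\mathrm d}(z,z')\pm\langle z-z',A(x-x')\rangle$, $d_{\mathrm{pcv}}(x,z;x',z')=d_-(x,z;x',z')-h(x)+h(x')+\langle\nabla h(x'),x-x'\rangle$, $d_{\mathrm{dcv}}(x,z;x',z')=d_+(x,z;x',z')-h(x)+h(x')+\langle\nabla h(x'),x-x'\rangle$. *)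

(* Defs.v *)
From HB Require Import structures.
From mathcomp Require Import all_boot all_order all_algebra.
From mathcomp Require Import all_classical all_reals all_analysis.
Set Implicit Arguments. Unset Strict Implicit. Unset Printing Implicit Defensive.
Import Order.TTheory GRing.Theory Num.Theory.
Import numFieldNormedType.Exports.
Local Open Scope classical_set_scope.
Local Open Scope ring_scope.

Section Defs.
Variable R : realType.

Definition dot (n : nat) (u v : 'cV[R]_n) : R := \sum_(i < n) u i 0 * v i 0.

Definition edom (n : nat) (F : 'cV[R]_n -> \bar R) : set 'cV[R]_n :=
  [set x | (F x < +oo)%E].

(* convexity of an extended-real-valued function (convex epigraph) *)
Definition econvex (n : nat) (F : 'cV[R]_n -> \bar R) : Prop :=
  forall (x y : 'cV[R]_n) (a b t : R), (F x <= a%:E)%E -> (F y <= b%:E)%E ->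
    0 <= t -> t <= 1 -> (F (t *: x + (1 - t) *: y)%R <= (t * a + (1 - t) * b)%:E)%E.

Definition eclosed (n : nat) (F : 'cV[R]_n -> \bar R) : Prop :=
  forall a : R, closed [set x | (F x <= a%:E)%E].

Definition eproper (n : nat) (F : 'cV[R]_n -> \bar R) : Prop :=
  (forall x, F x != -oo%E) /\ exists x, (F x < +oo)%E.

Definition conj (m : nat) (g : 'cV[R]_m -> \bar R) (z : 'cV[R]_m) : \bar R :=
  ereal_sup [set ((dot z y)%:E - g y)%E | y in [set: 'cV[R]_m]].

Definition subgrad (n : nat) (F : 'cV[R]_n -> \bar R) (x v : 'cV[R]_n) : Prop :=
  F x \is a fin_num /\ forall y, (F x + (dot v (y - x))%:E <= F y)%E.

Definition has_grad (n : nat) (F : 'cV[R]_n -> \bar R) (x g : 'cV[R]_n) : Prop :=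
  F x \is a fin_num /\ differentiable (fine \o F) x /\
  forall u, 'd (fine \o F) x u = dot g u.

Definition is_norm (n : nat) (N : 'cV[R]_n -> R) : Prop :=
  (forall x, 0 <= N x) /\ (forall x, N x = 0 -> x = 0) /\
  (forall (a : R) x, N (a *: x) = `|a| * N x) /\
  (forall x y, N (x + y) <= N x + N y).

Definition opnorm (m n : nat) (Nd : 'cV[R]_m -> R) (Np : 'cV[R]_n -> R)
  (A : 'M[R]_(m, n)) : R :=
  sup [set r : R | exists (u : 'cV[R]_n) (v : 'cV[R]_m),
        [/\ u != 0, v != 0 & r = dot v (A *m u) / (Nd v * Np u)]].

Definition bregman_kernel (n : nat) (phi : 'cV[R]_n -> \bar R)
  (gphi : 'cV[R]_n -> 'cV[R]_n) : Prop :=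
  econvex phi /\ (interior (edom phi) !=set0) /\
  (forall x, edom phi x -> phi x \is a fin_num) /\
  {within edom phi, continuous (fine \o phi)} /\
  (forall x, interior (edom phi) x -> has_grad phi x (gphi x)) /\
  (forall x, interior (edom phi) x -> {for x, continuous gphi}).

(* Bregman distance d(x,y) (for x in dom phi, y in int dom phi) *)
Definition bdist (n : nat) (phi : 'cV[R]_n -> \bar R)
  (gphi : 'cV[R]_n -> 'cV[R]_n) (x y : 'cV[R]_n) : R :=
  fine (phi x) - fine (phi y) - dot (gphi y) (x - y).

Definition prox_obj (n : nat) (phi : 'cV[R]_n -> \bar R)
  (gphi : 'cV[R]_n -> 'cV[R]_n) (F : 'cV[R]_n -> \bar R) (y a x : 'cV[R]_n)
  : \bar R :=
  (F x + (dot a x)%:E + (bdist phi gphi x y)%:E)%E.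

(* p is a minimizer of F(x) + <a,x> + d(x,y) (objective = +oo off dom phi) *)
Definition is_argmin_prox (n : nat) (phi : 'cV[R]_n -> \bar R)
  (gphi : 'cV[R]_n -> 'cV[R]_n) (F : 'cV[R]_n -> \bar R) (y a p : 'cV[R]_n)
  : Prop :=
  edom phi p /\
  forall x, edom phi x -> (prox_obj phi gphi F y a p <= prox_obj phi gphi F y a x)%E.

Definition prox_well_defined (n : nat) (phi : 'cV[R]_n -> \bar R)
  (gphi : 'cV[R]_n -> 'cV[R]_n) (F : 'cV[R]_n -> \bar R) : Prop :=
  forall (a y : 'cV[R]_n), interior (edom phi) y ->
    exists p, [/\ is_argmin_prox phi gphi F y a p, interior (edom phi) p &
      forall q, is_argmin_prox phi gphi F y a q -> q = p].

Definition is_prox (n : nat) (phi : 'cV[R]_n -> \bar R)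
  (gphi : 'cV[R]_n -> 'cV[R]_n) (F : 'cV[R]_n -> \bar R) (y a p : 'cV[R]_n)
  : Prop := is_argmin_prox phi gphi F y a p.

Definition escale (n : nat) (c : R) (F : 'cV[R]_n -> \bar R) : 'cV[R]_n -> \bar R :=
  fun x => (c%:E * F x)%E.

Definition lagr (m n : nat) (f h : 'cV[R]_n -> \bar R) (g : 'cV[R]_m -> \bar R)
  (A : 'M[R]_(m, n)) (x : 'cV[R]_n) (z : 'cV[R]_m) : \bar R :=
  if (f x + h x)%E == +oo%E then +oo%E
  else if conj g z == +oo%E then -oo%E
  else (f x + h x + (dot z (A *m x))%:E - conj g z)%E.

(* d_+ / d_- : sgn = true gives d_+, false gives d_- *)
Definition dpm (m n : nat) (sgn : bool) (tau sigma : R)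
  (phip : 'cV[R]_n -> \bar R) (gphip : 'cV[R]_n -> 'cV[R]_n)
  (phid : 'cV[R]_m -> \bar R) (gphid : 'cV[R]_m -> 'cV[R]_m)
  (A : 'M[R]_(m, n)) (x : 'cV[R]_n) (z : 'cV[R]_m) (x' : 'cV[R]_n) (z' : 'cV[R]_m)
  : R :=
  tau^-1 * bdist phip gphip x x' + sigma^-1 * bdist phid gphid z z'
  + (if sgn then 1 else -1) * dot (z - z') (A *m (x - x')).

(* d_pcv (sgn = false) / d_dcv (sgn = true) *)
Definition dcv (m n : nat) (sgn : bool) (tau sigma : R)
  (phip : 'cV[R]_n -> \bar R) (gphip : 'cV[R]_n -> 'cV[R]_n)
  (phid : 'cV[R]_m -> \bar R) (gphid : 'cV[R]_m -> 'cV[R]_m)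
  (A : 'M[R]_(m, n)) (h : 'cV[R]_n -> \bar R) (gh : 'cV[R]_n -> 'cV[R]_n)
  (x : 'cV[R]_n) (z : 'cV[R]_m) (x' : 'cV[R]_n) (z' : 'cV[R]_m) : R :=
  dpm sgn tau sigma phip gphip phid gphid A x z x' z'
  - fine (h x) + fine (h x') + dot (gh x') (x - x').

End Defs.

(* Main.v *)
Require Import Defs.
From HB Require Import structures.
From mathcomp Require Import all_boot all_order all_algebra.
From mathcomp Require Import all_classical all_reals all_analysis.
Import Order.TTheory GRing.Theory Num.Theory.
Import numFieldNormedType.Exports.
Local Open Scope classical_set_scope.
Local Open Scope ring_scope.
From mathcomp Require Import ring lra.
Set Implicit Arguments. Unset Strict Implicit.
Section S.
Variable R : realType.
Implicit Types (n : nat).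

Lemma dotDr n (u v w : 'cV[R]_n) : dot u (v + w) = dot u v + dot u w.
Proof. rewrite /dot -big_split; apply: eq_bigr => i _; by rewrite mxE mulrDr. Qed.
Lemma dotDl n (u v w : 'cV[R]_n) : dot (u + v) w = dot u w + dot v w.
Proof. rewrite /dot -big_split; apply: eq_bigr => i _; by rewrite mxE mulrDl. Qed.
Lemma dotZr n (u v : 'cV[R]_n) a : dot u (a *: v) = a * dot u v.
Proof. rewrite /dot mulr_sumr; apply: eq_bigr => i _; by rewrite mxE mulrCA. Qed.
Lemma dotZl n (u v : 'cV[R]_n) a : dot (a *: u) v = a * dot u v.
Proof. rewrite /dot mulr_sumr; apply: eq_bigr => i _; by rewrite mxE mulrA. Qed.
Lemma dotNr n (u v : 'cV[R]_n) : dot u (- v) = - dot u v.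
Proof. by rewrite -scaleN1r dotZr mulN1r. Qed.
Lemma dotNl n (u v : 'cV[R]_n) : dot (- u) v = - dot u v.
Proof. by rewrite -scaleN1r dotZl mulN1r. Qed.
Lemma dotBr n (u v w : 'cV[R]_n) : dot u (v - w) = dot u v - dot u w.
Proof. by rewrite dotDr dotNr. Qed.
Lemma dotBl n (u v w : 'cV[R]_n) : dot (u - v) w = dot u w - dot v w.
Proof. by rewrite dotDl dotNl. Qed.
Lemma dotT m n (A : 'M[R]_(m,n)) (z : 'cV[R]_m) (x : 'cV[R]_n) :
  dot (A^T *m z) x = dot z (A *m x).
Proof.
rewrite /dot.
transitivity (\sum_(i < n) \sum_(j < m) A j i * z j 0 * x i 0).
  by apply: eq_bigr => i _; rewrite !mxE big_distrl; apply: eq_bigr => j _; rewrite mxE.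
rewrite exchange_big /=; apply: eq_bigr => j _; rewrite mxE big_distrr /=.
by apply: eq_bigr => i _; rewrite mulrCA mulrA [_ * z j 0]mulrC.
Qed.

Lemma dlim n (F : 'cV[R]_n -> R) p v (gr : 'cV[R]_n) :
  differentiable F p -> (forall u, 'd F p u = dot gr u) ->
  (fun t : R => t^-1 * (F (p + t *: v) - F p)) @ 0^'+ --> dot gr v.
Proof.
move=> dF dE.
have cv : derivable F p v := diff_derivable dF.
move: cv; rewrite /derivable => cv.
have e : lim ((fun h : R => h^-1 *: ((F \o shift p) (h *: v) - F p)) @ 0^') = dot gr v.
  by rewrite -/(derive F p v) deriveE // dE.
rewrite e in cv.
have cv' : (fun h : R => h^-1 *: ((F \o shift p) (h *: v) - F p)) @ 0^'+ --> dot gr v.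
  move=> A /cv /nbhs_ballP [_ /posnumP[eps] xe_A].
  by exists eps%:num => //= y xe_y; rewrite lt_def => /andP [xney _]; apply: xe_A.
apply: cvg_trans cv'; apply: near_eq_cvg; near=> t => /=.
by rewrite [t *: v + p]addrC.
Unshelve. all: by end_near.
Qed.

Lemma lim_ge_right (Q : R -> R) l c : Q @ 0^'+ --> l ->
  (forall t : R, 0 < t -> t <= 1 -> c <= Q t) -> c <= l.
Proof.
move=> cv H; apply: (cvgr_to_ge cv); near=> t; apply: H.
  by near: t; exact: nbhs_right_gt.
by near: t; apply: nbhs_right_le; exact: ltr01.
Unshelve. all: by end_near.
Qed.

Lemma lim_le_right (Q : R -> R) l c : Q @ 0^'+ --> l ->
  (forall t : R, 0 < t -> t <= 1 -> Q t <= c) -> l <= c.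
Proof.
move=> cv H; apply: (cvgr_to_le cv); near=> t; apply: H.
  by near: t; exact: nbhs_right_gt.
by near: t; apply: nbhs_right_le; exact: ltr01.
Unshelve. all: by end_near.
Qed.

Lemma fin_le (y : \bar R) r : y != -oo%E -> (y <= r%:E)%E -> y \is a fin_num /\ fine y <= r.
Proof. by case: y => [s| |] //= _; rewrite lee_fin. Qed.

Lemma ptE n (x p : 'cV[R]_n) t : p + t *: (x - p) = t *: x + (1 - t) *: p.
Proof. apply/matrixP => i j; rewrite !mxE; ring. Qed.

Lemma conv_pt n (F : 'cV[R]_n -> \bar R) (x p : 'cV[R]_n) (t : R) : econvex F ->
  F x \is a fin_num -> F p \is a fin_num -> 0 <= t -> t <= 1 ->
  (F (p + t *: (x - p))%R <= (t * fine (F x) + (1 - t) * fine (F p))%:E)%E.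
Proof.
move=> cF fx fp t0 t1; rewrite ptE; apply: cF => //; by rewrite fineK.
Qed.

Lemma hgrad n (H : 'cV[R]_n -> \bar R) (g x0 x : 'cV[R]_n) : econvex H ->
  (forall y, H y != -oo%E) -> has_grad H x0 g -> H x \is a fin_num ->
  fine (H x0) + dot g (x - x0) <= fine (H x).
Proof.
move=> cH Hn [fx0 [dH dE]] fx.
have cv := dlim (v := x - x0) dH dE.
suff : dot g (x - x0) <= fine (H x) - fine (H x0) by lra.
apply: (lim_le_right cv) => t t0 t1 /=.
have [_ hle] := fin_le (Hn _) (conv_pt cH fx fx0 (ltW t0) t1).
rewrite mulrC ler_pdivrMr //; lra.
Qed.

Lemma escale_fin n c (f : 'cV[R]_n -> \bar R) x : f x \is a fin_num ->
  escale c f x = (c * fine (f x))%:E.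
Proof. by move=> fx; rewrite /escale EFinM fineK. Qed.

Lemma bk_fin n (phi : 'cV[R]_n -> \bar R) gphi x :
  bregman_kernel phi gphi -> edom phi x -> phi x \is a fin_num.
Proof. by case=> _ [_ [H _]]; apply: H. Qed.

Lemma bk_nNy n (phi : 'cV[R]_n -> \bar R) gphi x :
  bregman_kernel phi gphi -> phi x != -oo%E.
Proof.
move=> bk; apply/negP => /eqP e.
have : edom phi x by rewrite /edom /= e.
by move/(bk_fin bk); rewrite e.
Qed.

Lemma prox3 n (phi : 'cV[R]_n -> \bar R) gphi (f : 'cV[R]_n -> \bar R) c y a p x :
  bregman_kernel phi gphi -> econvex f -> (forall x, f x != -oo%E) -> 0 < c ->
  interior (edom phi) p -> is_argmin_prox phi gphi (escale c f) y a p ->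
  edom phi x -> edom f x ->
  f p \is a fin_num /\
  c * fine (f p) + dot a p + bdist phi gphi p y + bdist phi gphi x p <=
  c * fine (f x) + dot a x + bdist phi gphi x y.
Proof.
move=> bk cf fn c0 pint [_ amin] xd xf.
have fx : f x \is a fin_num by rewrite fin_numE fn /= -ltey.
have H0 := amin x xd; rewrite /prox_obj (escale_fin _ fx) in H0.
rewrite -!EFinD in H0.
have fp : f p \is a fin_num.
  move: H0; rewrite /escale; case: (f p) (fn p) => [r| |] //= _.
  by rewrite mulry gtr0_sg // mul1e.
split => //.
have pd : edom phi p by apply: interior_subset.
have phx := bk_fin bk xd; have php := bk_fin bk pd.
have [_ [_ [_ [_ [gr _]]]]] := bk.
have [_ [dP dE]] := gr p pint.
have cv := dlim (v := x - p) dP dE.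
set K := c * (fine (f x) - fine (f p)) + dot a (x - p) - dot (gphi y) (x - p).
have key : - K <= dot (gphi p) (x - p).
  apply: (lim_ge_right cv) => t t0 t1 /=.
  have [cP _] := bk.
  have [phtf phtle] := fin_le (bk_nNy _ bk) (conv_pt cP phx php (ltW t0) t1).
  have phtd : edom phi (p + t *: (x - p)) by rewrite /edom /= -(fineK phtf) ltry.
  have [ftf ftle] := fin_le (fn _) (conv_pt cf fx fp (ltW t0) t1).
  have := amin _ phtd.
  rewrite /prox_obj !escale_fin // -!EFinD lee_fin /bdist.
  rewrite !(dotDr, dotZr, dotBr, dotNr, dotDl, dotBl) /K !(dotDr, dotZr, dotBr, dotNr) => H1.
  rewrite [t^-1 * _]mulrC ler_pdivlMr // .
  have : c * fine (f (p + t *: (x - p))) <= c * (t * fine (f x) + (1 - t) * fine (f p)).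
    by rewrite ler_pM2l.
  nra.
move: key; rewrite /K /bdist !(dotDr, dotZr, dotBr, dotNr, dotDl, dotBl) => key.
lra.
Qed.

Lemma conj_ge m (g : 'cV[R]_m -> \bar R) z y :
  ((dot z y)%:E - g y <= conj g z)%E.
Proof. by apply: ereal_sup_ubound; exists y. Qed.

Lemma conj_nNy m (g : 'cV[R]_m -> \bar R) z : eproper g -> conj g z != -oo%E.
Proof.
move=> [gn [y0 gy0]].
have gf : g y0 \is a fin_num by rewrite fin_numE gn /= -ltey.
apply/negP => /eqP e; have := conj_ge g z y0.
by rewrite e -(fineK gf) -EFinB.
Qed.

Lemma conj_convex m (g : 'cV[R]_m -> \bar R) : eproper g -> econvex (conj g).
Proof.
move=> [gn _] z1 z2 a b t H1 H2 t0 t1.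
apply: ge_ereal_sup => _ [y _ <-].
have := conj_ge g z1 y; have := conj_ge g z2 y.
case: (g y) (gn y) => [r| |] // _.
  move=> /le_trans /(_ H2) h2 /le_trans /(_ H1) h1.
  rewrite -EFinB lee_fin in h1; rewrite -EFinB lee_fin in h2.
  rewrite -EFinB lee_fin dotDl !dotZl.
  have : t * (dot z1 y - r) <= t * a by rewrite ler_wpM2l.
  have : (1 - t) * (dot z2 y - r) <= (1 - t) * b by rewrite ler_wpM2l // subr_ge0.
  lra.
by move=> _ _; rewrite addeNy leNye.
Qed.

Lemma dotC n (u v : 'cV[R]_n) : dot u v = dot v u.
Proof. by rewrite /dot; apply: eq_bigr => i _; rewrite mulrC. Qed.

Lemma prox3s n (phi : 'cV[R]_n -> \bar R) gphi (f : 'cV[R]_n -> \bar R) c y b p x :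
  bregman_kernel phi gphi -> econvex f -> (forall x, f x != -oo%E) -> 0 < c ->
  interior (edom phi) p -> is_argmin_prox phi gphi (escale c f) y (c *: b) p ->
  edom phi x -> edom f x ->
  f p \is a fin_num /\
  fine (f p) + dot b p + c^-1 * (bdist phi gphi p y + bdist phi gphi x p) <=
  fine (f x) + dot b x + c^-1 * bdist phi gphi x y.
Proof.
move=> bk cf fn c0 pint am xd xf.
have [fp H] := prox3 bk cf fn c0 pint am xd xf.
split => //.
rewrite -(ler_pM2l c0) !mulrDr !mulrA mulfV ?gt_eqF // !mul1r.
move: H; rewrite /bdist !dotZl; lra.
Qed.

Lemma sum_nNy (a b : \bar R) : (a + b)%E != -oo%E -> a != -oo%E /\ b != -oo%E.
Proof. by case: a => [r| |]; case: b => [s| |]. Qed.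

Lemma lagr_fin m n (f h : 'cV[R]_n -> \bar R) (g : 'cV[R]_m -> \bar R) A x z :
  f x \is a fin_num -> h x \is a fin_num -> conj g z \is a fin_num ->
  lagr f h g A x z = (fine (f x) + fine (h x) + dot z (A *m x) - fine (conj g z))%:E.
Proof.
move=> fx hx gz; rewrite /lagr -(fineK fx) -(fineK hx) -(fineK gz) /=.
by rewrite !EFinD.
Qed.

Lemma core m n (f h : 'cV[R]_n -> \bar R) (gh : 'cV[R]_n -> 'cV[R]_n)
  (g : 'cV[R]_m -> \bar R) (A : 'M[R]_(m, n))
  (phip : 'cV[R]_n -> \bar R) (gphip : 'cV[R]_n -> 'cV[R]_n)
  (phid : 'cV[R]_m -> \bar R) (gphid : 'cV[R]_m -> 'cV[R]_m) (sigma tau : R)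
  (x0 x1 xbar x : 'cV[R]_n) (z0 z1 zbar z : 'cV[R]_m) :
  (forall x, f x != -oo%E) -> (forall x, h x != -oo%E) ->
  econvex f -> econvex h -> (forall x, edom h x -> has_grad h x (gh x)) ->
  eproper g -> bregman_kernel phip gphip -> bregman_kernel phid gphid ->
  edom phip `<=` edom h -> 0 < sigma -> 0 < tau ->
  edom h x0 -> interior (edom phip) x1 -> interior (edom phid) z1 ->
  is_argmin_prox phip gphip (escale tau f) x0
     (tau *: (A^T *m zbar) + tau *: gh x0) x1 ->
  is_argmin_prox phid gphid (escale sigma (conj g)) z0
     (- (sigma *: (A *m xbar))) z1 ->
  edom f x -> edom phip x -> edom (conj g) z -> edom phid z ->
  (lagr f h g A x1 z - lagr f h g A x z1 <=
   (tau^-1 * (bdist phip gphip x x0 - bdist phip gphip x x1 - bdist phip gphip x1 x0)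
    + sigma^-1 * (bdist phid gphid z z0 - bdist phid gphid z z1 - bdist phid gphid z1 z0)
    + (fine (h x1) - fine (h x0) - dot (gh x0) (x1 - x0))
    - dot zbar (A *m (x1 - x)) + dot z (A *m x1) - dot z1 (A *m x)
    - dot (z - z1) (A *m xbar))%:E)%E.
Proof.
move=> fn hn cf ch hgr gp bkp bkd sub s0 t0 hx0 ix1 iz1 amx amz xf xd zg zd.
rewrite -scalerDr in amx.
rewrite -scalerN in amz.
have [fx1 P1] := prox3s bkp cf fn t0 ix1 amx xd xf.
have [gz1 P2] := prox3s bkd (conj_convex gp) (fun z => conj_nNy z gp) s0 iz1 amz zd zg.
have finh y : edom h y -> h y \is a fin_num.
  by move=> hy; rewrite fin_numE hn /= -ltey.
have hx1 : h x1 \is a fin_num by apply: finh; apply: sub; exact: interior_subset.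
have hx : h x \is a fin_num by apply: finh; exact: sub.
have hx0f : h x0 \is a fin_num by exact: finh.
have fx : f x \is a fin_num by rewrite fin_numE fn /= -ltey.
have gz : conj g z \is a fin_num.
  by rewrite fin_numE conj_nNy //= -ltey.
have Hc := hgrad ch hn (hgr x0 hx0) hx.
rewrite !lagr_fin // -EFinB lee_fin.
move: P1 P2 Hc.
rewrite !(dotDl, dotNl, dotBr, dotDr, dotT, mulmxBr).

rewrite [dot (A *m xbar) z1]dotC [dot (A *m xbar) z]dotC; lra.
Qed.
End S.
Theorem mainTheorem3 (R : realType) (m n : nat)
  (f h : 'cV[R]_n -> \bar R) (gh : 'cV[R]_n -> 'cV[R]_n)
  (g : 'cV[R]_m -> \bar R) (A : 'M[R]_(m, n))
  (phip : 'cV[R]_n -> \bar R) (gphip : 'cV[R]_n -> 'cV[R]_n)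
  (phid : 'cV[R]_m -> \bar R) (gphid : 'cV[R]_m -> 'cV[R]_m)
  (Np : 'cV[R]_n -> R) (Nd : 'cV[R]_m -> R) (L sigma tau : R) :
  (* f, g, h closed convex; h differentiable on its open domain *)
  econvex f -> eclosed f -> econvex g -> eclosed g -> econvex h -> eclosed h ->
  open (edom h) -> (forall x, edom h x -> has_grad h x (gh x)) ->
  (* f + h and g proper *)
  eproper (fun x => (f x + h x)%E) -> eproper g ->
  (* Bregman kernels and well-definedness of the proximal maps *)
  bregman_kernel phip gphip -> bregman_kernel phid gphid ->
  prox_well_defined phip gphip (escale tau f) ->
  prox_well_defined phid gphid (escale sigma (conj g)) ->
  (* strong convexity of the kernels w.r.t. norms *)
  is_norm Np -> is_norm Nd ->
  (forall x x', edom phip x -> interior (edom phip) x' ->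
     2^-1 * Np (x - x') ^+ 2 <= bdist phip gphip x x') ->
  (forall z z', edom phid z -> interior (edom phid) z' ->
     2^-1 * Nd (z - z') ^+ 2 <= bdist phid gphid z z') ->
  (* relative smoothness of h *)
  edom phip `<=` edom h -> 0 < L ->
  (forall x x', edom phip x -> interior (edom phip) x' ->
     fine (h x) - fine (h x') - dot (gh x') (x - x') <= L * bdist phip gphip x x') ->
  (* existence of a solution of the optimality conditions *)
  (exists (xs : 'cV[R]_n) (zs : 'cV[R]_m), [/\ edom phip xs, edom phid zs,
     (exists v, subgrad f xs v /\ v + gh xs + A^T *m zs = 0) &
     (exists w, subgrad (conj g) zs w /\ w - A *m xs = 0)]) ->
  (* step sizes *)
  0 < sigma -> 0 < tau ->
  sigma * tau * opnorm Nd Np A ^+ 2 + tau * L <= 1 ->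
  (* Bregman primal Condat--Vu *)
  (forall (xk : nat -> 'cV[R]_n) (zk : nat -> 'cV[R]_m),
     interior (edom phip) (xk 0%N) -> edom h (xk 0%N) ->
     interior (edom phid) (zk 0%N) ->
     (forall k, is_prox phip gphip (escale tau f) (xk k)
                  (tau *: (A^T *m zk k) + tau *: gh (xk k)) (xk k.+1) /\
                is_prox phid gphid (escale sigma (conj g)) (zk k)
                  (- (sigma *: (A *m (2%:R *: xk k.+1 - xk k)))) (zk k.+1)) ->
     forall k (x : 'cV[R]_n) (z : 'cV[R]_m),
       edom f x -> edom phip x -> edom (conj g) z -> edom phid z ->
       (lagr f h g A (xk k.+1) z - lagr f h g A x (zk k.+1) <=
        (dpm false tau sigma phip gphip phid gphid A x z (xk k) (zk k)
         - dpm false tau sigma phip gphip phid gphid A x z (xk k.+1) (zk k.+1)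
         - dcv false tau sigma phip gphip phid gphid A h gh
             (xk k.+1) (zk k.+1) (xk k) (zk k))%:E)%E) /\
  (* Bregman dual Condat--Vu *)
  (forall (xk : nat -> 'cV[R]_n) (zk : nat -> 'cV[R]_m),
     interior (edom phip) (xk 0%N) -> edom h (xk 0%N) ->
     interior (edom phid) (zk 0%N) ->
     (forall k, is_prox phid gphid (escale sigma (conj g)) (zk k)
                  (- (sigma *: (A *m xk k))) (zk k.+1) /\
                is_prox phip gphip (escale tau f) (xk k)
                  (tau *: (A^T *m (2%:R *: zk k.+1 - zk k)) + tau *: gh (xk k))
                  (xk k.+1)) ->
     forall k (x : 'cV[R]_n) (z : 'cV[R]_m),
       edom f x -> edom phip x -> edom (conj g) z -> edom phid z ->
       (lagr f h g A (xk k.+1) z - lagr f h g A x (zk k.+1) <=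
        (dpm true tau sigma phip gphip phid gphid A x z (xk k) (zk k)
         - dpm true tau sigma phip gphip phid gphid A x z (xk k.+1) (zk k.+1)
         - dcv true tau sigma phip gphip phid gphid A h gh
             (xk k.+1) (zk k.+1) (xk k) (zk k))%:E)%E).
Proof.
move=> cf clf cg clg ch clh oh hgr fhp gp bkp bkd pwp pwd nNp nNd sp sd sub L0 Lsm sol s0 t0 step.
have fn : forall x, f x != -oo%E by move=> x; case: fhp => H _; have [] := sum_nNy (H x).
have hn : forall x, h x != -oo%E by move=> x; case: fhp => H _; have [] := sum_nNy (H x).
split.
- move=> xk zk ix0 hx0 iz0 Hit.
  have inv : forall k, interior (edom phip) (xk k) /\ interior (edom phid) (zk k).
    elim=> [|k [ixk izk]]; first by [].
    have [Hx Hz] := Hit k.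
    have [q [_ iq uq']] := pwd (- (sigma *: (A *m (2%:R *: xk k.+1 - xk k)))) (zk k) izk.
    have [p [_ ip uq]] := pwp (tau *: (A^T *m zk k) + tau *: gh (xk k)) (xk k) ixk.
    by rewrite (uq _ Hx) (uq' _ Hz).
  have hxk : forall k, edom h (xk k).
    case => [|k] //; apply: sub; apply: interior_subset; exact: (inv k.+1).1.
  move=> k x z xf xd zg zd.
  have [Hx Hz] := Hit k.
  apply: le_trans (core fn hn cf ch hgr gp bkp bkd sub s0 t0 (hxk k) (inv k.+1).1 (inv k.+1).2 Hx Hz xf xd zg zd) _.
  rewrite lee_fin /dcv /dpm /=.
  rewrite !mulmxBr -?scalemxAr !( dotZr, dotDl, dotNl, dotBr, dotDr, dotBl).
  lra.
- move=> xk zk ix0 hx0 iz0 Hit.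
  have inv : forall k, interior (edom phip) (xk k) /\ interior (edom phid) (zk k).
    elim=> [|k [ixk izk]]; first by [].
    have [Hz Hx] := Hit k.
    have [q [_ iq uq']] := pwd (- (sigma *: (A *m xk k))) (zk k) izk.
    have [p [_ ip uq]] := pwp (tau *: (A^T *m (2%:R *: zk k.+1 - zk k)) + tau *: gh (xk k)) (xk k) ixk.
    by rewrite (uq _ Hx) (uq' _ Hz).
  have hxk : forall k, edom h (xk k).
    case => [|k] //; apply: sub; apply: interior_subset; exact: (inv k.+1).1.
  move=> k x z xf xd zg zd.
  have [Hz Hx] := Hit k.
  apply: le_trans (core fn hn cf ch hgr gp bkp bkd sub s0 t0 (hxk k) (inv k.+1).1 (inv k.+1).2 Hx Hz xf xd zg zd) _.
  rewrite lee_fin /dcv /dpm /=.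
  rewrite !mulmxBr -?scalemxAr !( dotZr, dotZl, dotDl, dotNl, dotBr, dotDr, dotBl).
  lra.
Qed.
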